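(* Let $S=\langle n_1,n_2,n_3,n_4\rangle$ be a pseudo-symmetric numerical semigroup with embedding dimension $4$, with generators labeled so that the (unique) RF-matrix of $F(S)/2$ is $$\mathrm{RF}(F(S)/2)=\begin{pmatrix} -1 & \alpha_2-1 & 0 & 0\\ 0 & -1 & \alpha_3-1 & 0\\ \alpha_1-1 & 0 & -1 & \alpha_4-1\\ \alpha_1-1 & a & 0 & -1\end{pmatrix}$$ for some non-negative integer $a$ (such a labeling always exists). Then every $n_i$ is odd if and only if one of the following holds: 1) $F(S)/2$ is odd and every row of $\mathrm{RF}(F(S)/2)$ is odd; 2) $F(S)/2$ is even and every row of $\mathrm{RF}(F(S)/2)$ is even.
   Context: $F(S)=\max(\mathbb{Z}\setminus S)$. A pseudo-Frobenius number of $S$ is an integer $f\notin S$ with $f+s\in S$ for all $s\in S\setminus\{0\}$; $S$ is pseudo-symmetric if its set of pseudo-Frobenius numbers is $\{F(S)/2,F(S)\}$. For $S$ minimally generated by $n_1,\dots,n_4$, $\alpha_i$ is the least positive integer such that $\alpha_in_i$ is a non-negative integer combination of the $n_j$, $j\ne i$. For a pseudo-Frobenius number $f$, an RF-matrix of $f$ is a $4\times4$ integer matrix $(a_{ij})$ with $a_{ii}=-1$, $a_{ij}\geq 0$ for $i\neq j$, and $f=\sum_{j=1}^4 a_{ij}n_j$ for every $i$. The $i$-th row is called even (resp. odd) if $\sum_{j=1}^4 a_{ij}$ is even (resp. odd). *)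

(* Defs.v *)
From HB Require Import structures.
From mathcomp Require Import all_boot all_order all_algebra.
Set Implicit Arguments. Unset Strict Implicit. Unset Printing Implicit Defensive.
Import Order.TTheory GRing.Theory Num.Theory.
Local Open Scope ring_scope.

Definition inS (n : 'I_4 -> nat) (x : int) : Prop :=
  exists c : 'I_4 -> nat, x = ((\sum_(j < 4) c j * n j)%N)%:Z.

Definition in_others (n : 'I_4 -> nat) (i : 'I_4) (m : nat) : Prop :=
  exists c : 'I_4 -> nat, c i = 0%N /\ m = (\sum_(j < 4) c j * n j)%N.

(* S is a numerical semigroup: Z \ S is finite (equivalently, S contains
   all sufficiently large integers; negatives are never in S). *)
Definition numerical (n : 'I_4 -> nat) : Prop :=
  exists b : int, forall x : int, b <= x -> inS n x.

Definition minimally_generated (n : 'I_4 -> nat) : Prop :=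
  forall i : 'I_4, ~ in_others n i (n i).

Definition is_frobenius (n : 'I_4 -> nat) (F : int) : Prop :=
  ~ inS n F /\ forall x : int, F < x -> inS n x.

Definition pseudo_frobenius (n : 'I_4 -> nat) (f : int) : Prop :=
  ~ inS n f /\ forall s : nat, (0 < s)%N -> inS n s%:Z -> inS n (f + s%:Z).

Definition is_alpha (n : 'I_4 -> nat) (i : 'I_4) (k : nat) : Prop :=
  [/\ (0 < k)%N, in_others n i (k * n i)%N &
      forall k' : nat, (0 < k')%N -> (k' < k)%N -> ~ in_others n i (k' * n i)%N].

Definition RF_matrix (n : 'I_4 -> nat) (f : int) (A : 'M[int]_4) : Prop :=
  forall i : 'I_4,
    [/\ A i i = -1,
        forall j : 'I_4, i != j -> 0 <= A i j
      & f = \sum_(j < 4) A i j * (n j)%:Z].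

Definition row_sum (A : 'M[int]_4) (i : 'I_4) : int := \sum_(j < 4) A i j.
Definition row_even (A : 'M[int]_4) (i : 'I_4) : bool := (2 %| row_sum A i)%Z.
Definition row_odd (A : 'M[int]_4) (i : 'I_4) : bool := ~~ row_even A i.

(* The matrix
    [ -1      al2-1  0      0     ]
    [  0      -1     al3-1  0     ]
    [ al1-1   0      -1     al4-1 ]
    [ al1-1   a      0      -1    ]
   where al_{k+1} = al (inord k) (paper's 1-based index k+1 = our index k). *)
Definition RF_pattern (al : 'I_4 -> nat) (a : nat) : 'M[int]_4 :=
  \matrix_(i < 4, j < 4)
    let alz (k : nat) : int := (al (inord k))%:Z - 1 in
    match val i, val j with
    | 0, 0 => -1 | 0, 1 => alz 1%N | 0, _ => 0
    | 1, 1 => -1 | 1, 2 => alz 2%N | 1, _ => 0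
    | 2, 0 => alz 0%N | 2, 2 => -1 | 2, 3 => alz 3%N | 2, _ => 0
    | _, 0 => alz 0%N | _, 1 => a%:Z | _, 3 => -1 | _, _ => 0
    end.

(* Main.v *)
Require Import Defs.
From HB Require Import structures.
From mathcomp Require Import all_boot all_order all_algebra.
From mathcomp Require Import ring lra.
Import Order.TTheory GRing.Theory Num.Theory.
Local Open Scope ring_scope.

Lemma F2cases (x : 'F_2) : x = 0 \/ x = 1.
Proof. by case: x => [[|[|k]]] //= H; [left|right]; apply/val_inj. Qed.

Lemma key (x0 x1 x2 x3 b1 b2 b3 c0 aa hh : 'F_2) :
 (hh == -x0 + b1*x1) ==> (hh == -x1 + b2*x2) ==> (hh == c0*x0 - x2 + b3*x3) ==>
 (hh == c0*x0 + aa*x1 - x3) ==> ~~[&& x0 == 0, x1==0, x2==0 & x3==0] ==>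
 ([&& x0 != 0, x1 != 0, x2 != 0 & x3 != 0] ==
  ((hh != 0) && [&& -1 + b1 != 0, -1 + b2 != 0, c0 - 1 + b3 != 0 & c0 + aa - 1 != 0]
   || (hh == 0) && [&& -1 + b1 == 0, -1 + b2 == 0, c0 - 1 + b3 == 0 & c0 + aa - 1 == 0])).
Proof.
case: (F2cases x0) => ->; case: (F2cases x1) => ->; case: (F2cases x2) => ->;
case: (F2cases x3) => ->; case: (F2cases b1) => ->; case: (F2cases b2) => ->;
case: (F2cases b3) => ->; case: (F2cases c0) => ->; case: (F2cases aa) => ->;
case: (F2cases hh) => ->; by vm_compute.
Qed.

Lemma dv2 (z : int) : (2 %| z)%Z = (z%:~R == 0 :> 'F_2).
Proof.
have P2 : (2 \in [pchar 'F_2])%N by apply: pchar_Fp.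
case: z => k.
  by rewrite pmulrn -(dvdn_pcharf P2).
by rewrite NegzE mulrNz oppr_eq0 pmulrn -(dvdn_pcharf P2).
Qed.

Lemma oddF (k : nat) : odd k = ((k%:Z)%:~R != 0 :> 'F_2).
Proof. by rewrite -dv2 -[(2 %| _)%Z]/(2 %| k)%N dvdn2 negbK. Qed.

Lemma split4 (P : 'I_4 -> Prop) : (forall i, P i) <->
  [/\ P ord0, P (lift ord0 ord0), P (lift ord0 (lift ord0 ord0))
    & P (lift ord0 (lift ord0 (lift ord0 ord0)))].
Proof.
split; first by move=> H; split; apply: H.
case=> H0 H1 H2 H3 [[|[|[|[|k]]]] Hi] //.
- by rewrite (_ : Ordinal Hi = ord0) //; apply: val_inj.
- by rewrite (_ : Ordinal Hi = lift ord0 ord0) //; apply: val_inj.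
- by rewrite (_ : Ordinal Hi = lift ord0 (lift ord0 ord0)) //; apply: val_inj.
- by rewrite (_ : Ordinal Hi = lift ord0 (lift ord0 (lift ord0 ord0))) //; apply: val_inj.
Qed.

Theorem proposition4p1 (n : 'I_4 -> nat) (al : 'I_4 -> nat) (a : nat)
    (F h : int) :
  numerical n ->
  minimally_generated n ->
  is_frobenius n F ->
  F = 2 * h ->
  (forall f : int, pseudo_frobenius n f <-> (f = h \/ f = F)) ->
  (forall i : 'I_4, is_alpha n i (al i)) ->
  RF_matrix n h (RF_pattern al a) ->
  (forall i : 'I_4, odd (n i)) <->
  ((~~ (2 %| h)%Z /\ forall i : 'I_4, row_odd (RF_pattern al a) i) \/
   ((2 %| h)%Z /\ forall i : 'I_4, row_even (RF_pattern al a) i)).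
Proof.
move=> Hnum _ _ _ _ _ H.
have [_ _ e0] := H ord0. have [_ _ e1] := H (lift ord0 ord0).
have [_ _ e2] := H (lift ord0 (lift ord0 ord0)). have [_ _ e3] := H (lift ord0 (lift ord0 (lift ord0 ord0))).
rewrite !big_ord_recl !big_ord0 /= !mxE /= in e0 e1 e2 e3.
pose phi (z : int) : 'F_2 := z%:~R.
pose x0 := phi (n ord0). pose x1 := phi (n (lift ord0 ord0)).
pose x2 := phi (n (lift ord0 (lift ord0 ord0))). pose x3 := phi (n (lift ord0 (lift ord0 (lift ord0 ord0)))).
pose b1 := phi ((al (inord 1))%:Z - 1). pose b2 := phi ((al (inord 2))%:Z - 1).
pose b3 := phi ((al (inord 3))%:Z - 1). pose c0 := phi ((al (inord 0))%:Z - 1).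
pose aa := phi a. pose hh := phi h.
have f0 : hh = -x0 + b1 * x1 by rewrite /hh /phi e0 !intrD !intrM !intrN; ring.
have f1 : hh = -x1 + b2 * x2 by rewrite /hh /phi e1 !intrD !intrM !intrN; ring.
have f2 : hh = c0*x0 - x2 + b3 * x3 by rewrite /hh /phi e2 !intrD !intrM !intrN; ring.
have f3 : hh = c0*x0 + aa*x1 - x3 by rewrite /hh /phi e3 !intrD !intrM !intrN; ring.
set A := RF_pattern al a.
have R0 : phi (row_sum A ord0) = -1 + b1.
  by rewrite /phi /row_sum !big_ord_recl !big_ord0 /= !mxE /= !intrD !intrN; ring.
have R1 : phi (row_sum A (lift ord0 ord0)) = -1 + b2.
  by rewrite /phi /row_sum !big_ord_recl !big_ord0 /= !mxE /= !intrD !intrN; ring.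
have R2 : phi (row_sum A (lift ord0 (lift ord0 ord0))) = c0 - 1 + b3.
  by rewrite /phi /row_sum !big_ord_recl !big_ord0 /= !mxE /= !intrD !intrN; ring.
have R3 : phi (row_sum A (lift ord0 (lift ord0 (lift ord0 ord0)))) = c0 + aa - 1.
  by rewrite /phi /row_sum !big_ord_recl !big_ord0 /= !mxE /= !intrD !intrN; ring.
have NZ : ~~ [&& x0 == 0, x1 == 0, x2 == 0 & x3 == 0].
  apply/negP => /and4P [/eqP z0 /eqP z1 /eqP z2 /eqP z3].
  have [b Hb] := Hnum.
  have [|c Hc] := Hb (2 * `|b|%:Z + 1).
    have : b <= `|b|%:Z by rewrite abszE ler_norm.
    have : 0 <= `|b|%:Z by [].
    lra.
  move/(congr1 phi): Hc.
  rewrite /phi intrD intrM (_ : (2 : int)%:~R = 0 :> 'F_2); last by apply/eqP; vm_compute.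
  rewrite mul0r add0r /= -!pmulrn natr_sum !big_ord_recl big_ord0 /= !natrM.
  move: z0 z1 z2 z3; rewrite /x0 /x1 /x2 /x3 /phi -!pmulrn => -> -> -> ->.
  rewrite !mulr0 !addr0 => /eqP; by vm_compute.
have K := key x0 x1 x2 x3 b1 b2 b3 c0 aa hh.
rewrite f0 eqxx /= -f0 f1 eqxx /= -f1 f2 eqxx /= -f2 f3 eqxx /= -f3 NZ /= in K.
rewrite -R0 -R1 -R2 -R3 in K.
have E1 : (forall i, odd (n i)) <-> [&& x0 != 0, x1 != 0, x2 != 0 & x3 != 0].
  apply: (iff_trans (split4 (fun i => odd (n i)))).
  rewrite !oddF; exact: (rwP and4P).
have E2 : (forall i, row_odd A i) <-> [&& phi (row_sum A ord0) != 0,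
   phi (row_sum A (lift ord0 ord0)) != 0, phi (row_sum A (lift ord0 (lift ord0 ord0))) != 0 & phi (row_sum A (lift ord0 (lift ord0 (lift ord0 ord0)))) != 0].
  apply: (iff_trans (split4 (fun i => row_odd A i))).
  rewrite /row_odd /row_even !dv2; exact: (rwP and4P).
have E3 : (forall i, row_even A i) <-> [&& phi (row_sum A ord0) == 0,
   phi (row_sum A (lift ord0 ord0)) == 0, phi (row_sum A (lift ord0 (lift ord0 ord0))) == 0 & phi (row_sum A (lift ord0 (lift ord0 (lift ord0 ord0)))) == 0].
  apply: (iff_trans (split4 (fun i => row_even A i))).
  rewrite /row_even !dv2; exact: (rwP and4P).
rewrite dv2 -/(phi h) -/hh.
rewrite (eqP K) in E1.
rewrite E1; split.
- case/orP => /andP [Hh Hr]; [left; split => //; exact/E2 | right; split => //; exact/E3].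
- case=> [[Hh /E2 Hr]|[Hh /E3 Hr]]; apply/orP; [left|right]; apply/andP; split => //.
Qed.
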